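(* Let $l,u$ be integers with $0<l\le u<K$ and $\Pi=\Pi_{l,u}$. Let $\chi^\circ$ be any of the three procedures $\hat\chi,\tilde\chi,\check\chi$ (with some fixed thresholds) and suppose that $\mathrm{FWE}^i_A(\chi^\circ)\le1/2$ for $i\in\{1,2\}$ and all $A\in\Pi_{l,u}$. Then, for $i\in\{1,2\}$ and every $A\in\Pi_{l,u}$, $$\mathrm{pFDR}^i_A(\chi^\circ)\le 2\,\mathrm{FWE}^i_A(\chi^\circ),$$ and $$\mathrm{pFDR}^i_A(\chi)\ge\frac1K\,\mathrm{FWE}^i_A(\chi)\quad\text{for every procedure }\chi.$$
   Context: Let $K\ge2$, $[K]=\{1,\dots,K\}$, $\mathbb N=\{1,2,\dots\}$. There are $K$ independent data streams $X_k=\{X_k(n):n\in\mathbb N\}$; $\mathcal F_k(n)=\sigma(X_k(t):t\le n)$, $\mathcal F(n)=\sigma(\mathcal F_k(n):k\in[K])$. For each $k$, $\mathrm P_k^0,\mathrm P_k^1$ are distributions of $X_k$ mutually absolutely continuous on each $\mathcal F_k(n)$, $\lambda_k(n)=\log\frac{d\mathrm P_k^1}{d\mathrm P_k^0}(\mathcal F_k(n))$. For $A\subseteq[K]$, $\mathrm P_A$ is the joint law with independent streams, $X_k\sim\mathrm P_k^1$ if $k\in A$, $\mathrm P_k^0$ otherwise; $\mathrm E_A$ its expectation. $\Pi_{l,u}=\{A\subseteq[K]:l\le|A|\le u\}$. $\lambda_{(1)}(n)\ge\dots\ge\lambda_{(K)}(n)$ are the ordered LLRs, $p(n)=|\{k:\lambda_k(n)>0\}|$.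 A procedure $\chi=(\mathbf T,\mathbf D)$: $\mathbb N$-valued stopping times $T_k$ w.r.t. $\{\mathcal F(n)\}$ and $\mathcal F(T_k)$-measurable Bernoulli $D_k$; $\mathbf D=\{k:D_k=1\}$. $\mathrm{FWE}^1_A(\chi)=\mathrm P_A(\mathbf D\setminus A\ne\emptyset)$, $\mathrm{FWE}^2_A(\chi)=\mathrm P_A(A\setminus\mathbf D\ne\emptyset)$. Positive false discovery / non-discovery rates: $\mathrm{pFDR}^1_A(\chi)=\mathrm E_A\big[\frac{|\mathbf D\setminus A|}{|\mathbf D|}\,\big|\,|\mathbf D|\ge1\big]$, $\mathrm{pFDR}^2_A(\chi)=\mathrm E_A\big[\frac{|A\setminus\mathbf D|}{K-|\mathbf D|}\,\big|\,K-|\mathbf D|\ge1\big]$. The three procedures (thresholds $a,b,c,d>0$): parallel SPRT $\tilde\chi$: $\tilde T_k=\inf\{n:\lambda_k(n)\notin(-b,a)\}$, $\tilde D_k=\mathbf 1\{\lambda_k(\tilde T_k)\ge a\}$. Proposed $\hat\chi$: $\hat T_k=\hat T_{k,1}\wedge\hat T_{k,2}$, $\hat D_k=1$ iff $\hat T_k=\hat T_{k,1}$, where if $l=u\equiv m$, $\hat T_{k,1}=\inf\{n:\lambda_k(n)\ge\lambda_{(m+1)}(n)+c\}$, $\hat T_{k,2}=\inf\{n:\lambda_k(n)\le\lambda_{(m)}(n)-d\}$, and if $l<u$, $\hat T_{k,1}=\inf\{n:\lambda_k(n)\ge\min\{a,\lambda_{(l+1)}(n)+c\}\}$, $\hat T_{k,2}=\inf\{n:\lambda_k(n)\le\max\{-b,\lambda_{(u)}(n)-d\}\}$.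 Synchronous $\check\chi$: common time $\check T$; if $l=u\equiv m$, $\check T=\inf\{n:\lambda_{(m)}(n)-\lambda_{(m+1)}(n)\ge c\vee d\}$ with the $m$ largest-LLR streams declared signals; if $l<u$, $\check T=\tau_1\wedge\tau_2\wedge\tau_3$, $\tau_1=\inf\{n:\lambda_{(l+1)}(n)\le\min\{-b,-c+\lambda_{(l)}(n)\}\}$, $\tau_2=\inf\{n:\lambda_k(n)\notin(-b,a)\ \forall k,\ l\le p(n)\le u\}$, $\tau_3=\inf\{n:\lambda_{(u)}(n)\ge\max\{a,d+\lambda_{(u+1)}(n)\}\}$, with the $(p(\check T)\vee l)\wedge u$ largest-LLR streams declared signals. *)

(* Defs.v *)
From HB Require Import structures.
From mathcomp Require Import all_boot all_order all_algebra.
From mathcomp Require Import all_classical all_reals all_analysis.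
Set Implicit Arguments. Unset Strict Implicit. Unset Printing Implicit Defensive.
Import Order.TTheory GRing.Theory Num.Theory.
Local Open Scope classical_set_scope.
Local Open Scope ring_scope.

Section Defs.
Context {R : realType} {d d' : measure_display}
        {Omega : measurableType d} {V : measurableType d'} {K : nat}.

(* X k t : observation of stream k at time t (t in N = {1,2,...}). *)
Implicit Types (X : 'I_K -> nat -> Omega -> V)
               (lam : 'I_K -> nat -> Omega -> R).

Definition Fk X (k : 'I_K) (n : nat) : set (set Omega) :=
  <<s [set E | exists t B, (1 <= t <= n)%N /\ measurable B /\
                           E = X k t @^-1` B] >>.

Definition Fstream X (k : 'I_K) : set (set Omega) :=
  <<s [set E | exists t B, (1 <= t)%N /\ measurable B /\ E = X k t @^-1` B] >>.

Definition Fall X (n : nat) : set (set Omega) :=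
  <<s [set E | exists k t B, (1 <= t <= n)%N /\ measurable B /\
                             E = X k t @^-1` B] >>.

(* The standing model: measurable streams; under P_A the streams are
   independent, the law of X_k depends only on whether k \in A, and
   lam k n = log dP_k^1/dP_k^0 restricted to F_k(n). *)
Definition stream_model X (P : {set 'I_K} -> probability Omega R) lam : Prop :=
  [/\ (forall k t, measurable_fun setT (X k t)),
      (forall (A : {set 'I_K}) (B : 'I_K -> set Omega), (forall k, Fstream X k (B k)) ->
         fine (P A (\bigcap_(k in [set: 'I_K]) B k)) =
         \prod_(k < K) fine (P A (B k))),
      (forall (A A' : {set 'I_K}) k, (k \in A) = (k \in A') ->
         forall B, Fstream X k B -> P A B = P A' B),
      (forall k n, (1 <= n)%N -> forall B : set R, measurable B ->
         Fk X k n (lam k n @^-1` B)) &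
      (forall k n (A : {set 'I_K}) B, (1 <= n)%N -> k \notin A -> Fk X k n B ->
         P (k |: A) B = (\int[P A]_(x in B) (expR (lam k n x))%:E)%E)].

(* Procedure chi = (T, D): N-valued {F(n)}-stopping times T_k and
   F(T_k)-measurable decisions D_k; D is the set {k : D_k = 1}. *)
Definition is_procedure X (T : 'I_K -> Omega -> nat)
    (D : Omega -> {set 'I_K}) : Prop :=
  forall k, (forall w, (1 <= T k w)%N) /\
    (forall n, Fall X n [set w | T k w = n]) /\
    (forall n, Fall X n [set w | T k w = n /\ k \in D w]).

(* j-th largest value (j >= 1) among x_1, ..., x_K *)
Definition ord_stat (x : 'I_K -> R) (j : nat) : R :=
  nth 0 (sort (fun a b : R => b <= a) [seq x k | k <- enum 'I_K]) j.-1.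

Definition pos_count (x : 'I_K -> R) : nat := #|finset (fun k : 'I_K => 0 < x k)|.

Definition first_time (Q : nat -> Prop) (n : nat) : Prop :=
  [/\ (1 <= n)%N, Q n & forall m, (1 <= m < n)%N -> ~ Q m].

Definition is_tilde (a b : R) lam (T : 'I_K -> Omega -> nat)
    (D : Omega -> {set 'I_K}) : Prop :=
  forall k w,
    let Q := fun n => ~ (- b < lam k n w < a) in
    (exists n, (1 <= n)%N /\ Q n) ->
    first_time Q (T k w) /\ (k \in D w <-> a <= lam k (T k w) w).

Definition hat_cond1 (l u : nat) (a c : R) lam k n w : Prop :=
  let x := fun j => lam j n w in
  if l == u then ord_stat x l.+1 + c <= lam k n w
  else Num.min a (ord_stat x l.+1 + c) <= lam k n w.
Definition hat_cond2 (l u : nat) (b dth : R) lam k n w : Prop :=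
  let x := fun j => lam j n w in
  if l == u then lam k n w <= ord_stat x l - dth
  else lam k n w <= Num.max (- b) (ord_stat x u - dth).

Definition is_hat (l u : nat) (a b c dth : R) lam (T : 'I_K -> Omega -> nat)
    (D : Omega -> {set 'I_K}) : Prop :=
  forall k w,
    let Q := fun n => hat_cond1 l u a c lam k n w \/ hat_cond2 l u b dth lam k n w in
    (exists n, (1 <= n)%N /\ Q n) ->
    first_time Q (T k w) /\ (k \in D w <-> hat_cond1 l u a c lam k (T k w) w).

Definition check_stop (l u : nat) (a b c dth : R) lam n w : Prop :=
  let x := fun j => lam j n w in
  if l == u then is_true (Num.max c dth <= ord_stat x l - ord_stat x l.+1)
  else [\/ ord_stat x l.+1 <= Num.min (- b) (- c + ord_stat x l),
           (forall k, ~ (- b < x k < a)) /\ (l <= pos_count x <= u)%N |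
           Num.max a (dth + ord_stat x u.+1) <= ord_stat x u].
Definition check_nsig (l u : nat) lam n w : nat :=
  if l == u then l else minn (maxn (pos_count (fun j => lam j n w)) l) u.

Definition is_check (l u : nat) (a b c dth : R) lam (T : 'I_K -> Omega -> nat)
    (D : Omega -> {set 'I_K}) : Prop :=
  forall w,
    (exists n, (1 <= n)%N /\ check_stop l u a b c dth lam n w) ->
    exists Tc, [/\ first_time (fun n => check_stop l u a b c dth lam n w) Tc,
      (forall k, T k w = Tc) &
      D w = finset (fun k : 'I_K => ord_stat (fun j => lam j Tc w) (check_nsig l u lam Tc w)
                     <= lam k Tc w)].

Definition FWE1 (PA : probability Omega R) (D : Omega -> {set 'I_K})
    (A : {set 'I_K}) : R := fine (PA [set w | ~~ (D w \subset A)]).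
Definition FWE2 (PA : probability Omega R) (D : Omega -> {set 'I_K})
    (A : {set 'I_K}) : R := fine (PA [set w | ~~ (A \subset D w)]).

(* E[Y | B] = E[Y 1_B] / P(B)  (= 0 by the convention x/0 = 0 if P(B)=0) *)
Definition pFDR1 (PA : probability Omega R) (D : Omega -> {set 'I_K})
    (A : {set 'I_K}) : R :=
  fine (\int[PA]_(w in [set w | (1 <= #|D w|)%N])
          ((#|D w :\: A|%:R / #|D w|%:R)%:E))%E
  / fine (PA [set w | (1 <= #|D w|)%N]).
Definition pFDR2 (PA : probability Omega R) (D : Omega -> {set 'I_K})
    (A : {set 'I_K}) : R :=
  fine (\int[PA]_(w in [set w | (1 <= K - #|D w|)%N])
          ((#|A :\: D w|%:R / (K - #|D w|)%:R)%:E))%E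
  / fine (PA [set w | (1 <= K - #|D w|)%N]).

Definition in_Pi (l u : nat) (A : {set 'I_K}) : bool := (l <= #|A| <= u)%N.

End Defs.

(* Main.v *)
Require Import Defs.
From HB Require Import structures.
From mathcomp Require Import all_boot all_order all_algebra.
From mathcomp Require Import all_classical all_reals all_analysis.
From mathcomp Require Import measurable_realfun.
From mathcomp Require Import lra zify.
Import Order.TTheory GRing.Theory Num.Theory.
Local Open Scope classical_set_scope.
Local Open Scope ring_scope.


Lemma key (R : realType) d (Om : measurableType d) (P : probability Om R)
  (E F : set Om) (f : Om -> R) (c : R) :
  measurable E -> measurable F ->
  measurable_fun E ((fun w => (f w)%:E) : Om -> \bar R) -> F `<=` E ->
  (forall w, E w -> 0 <= f w <= 1) -> (forall w, E w -> ~ F w -> f w = 0) ->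
  (forall w, F w -> c <= f w) -> 0 <= c ->
  [/\ 0 <= fine (\int[P]_(w in E) (f w)%:E)%E,
      fine (\int[P]_(w in E) (f w)%:E)%E <= fine (P F) &
      c * fine (P F) <= fine (\int[P]_(w in E) (f w)%:E)%E].
Proof.
move=> mE mF mf FE h01 h0 hc c0.
set I := (\int[P]_(w in E) (f w)%:E)%E.
have I0 : (0 <= I)%E.
  by apply: integral_ge0 => w Ew; rewrite lee_fin; case/andP: (h01 w Ew).
have IF : (I <= P F)%E.
  rewrite -(setIidl FE) -integral_indic //; apply: ge0_le_integral => //.
  - by move=> w Ew; rewrite lee_fin; case/andP: (h01 w Ew).
  - by apply/measurable_EFinP; exact: measurable_indic.
  - move=> w Ew; rewrite lee_fin indicE; case: (boolP (w \in F)) => [/set_mem wF|wF].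
      by case/andP: (h01 w Ew).
    by rewrite h0 // => /mem_set; apply/negP.
have IF2 : (c%:E * P F <= I)%E.
  rewrite -integral_cst //; apply: (@le_trans _ _ (\int[P]_(w in F) (f w)%:E)%E).
    apply: ge0_le_integral => //.
    exact: measurable_funS mf.
  apply: ge0_subset_integral => //.
  by move=> w Ew; rewrite lee_fin; case/andP: (h01 w Ew).
have PFfin : P F \is a fin_num by apply: fin_num_measure.
have Ifin : I \is a fin_num.
  by rewrite ge0_fin_numE // (le_lt_trans IF) // ltey_eq PFfin.
rewrite -(fineK PFfin) -(fineK Ifin) in I0 IF IF2.
rewrite !lee_fin in I0 IF IF2.
by split.
Qed.
Lemma ratio_01 (R : realType) (a b : nat) : (a <= b)%N -> (0 < b)%N ->
  0 <= a%:R / b%:R :> R /\ a%:R / b%:R <= 1 :> R.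
Proof.
move=> ab b0; split; first by rewrite divr_ge0.
by rewrite ler_pdivrMr ?ltr0n // mul1r ler_nat.
Qed.

Lemma ratio_low (R : realType) (K a b : nat) : (1 <= a)%N -> (1 <= b)%N -> (b <= K)%N ->
  K%:R^-1 <= a%:R / b%:R :> R.
Proof.
move=> a1 b1 bK.
have K0 : (0:R) < K%:R by rewrite ltr0n; lia.
have b0 : (0:R) < b%:R by rewrite ltr0n; lia.
rewrite ler_pdivlMr // mulrC ler_pdivrMr // -natrM ler_nat; nia.
Qed.

Lemma nat1 (x y z : nat) : ~ (1 <= y)%N -> (z <= x)%N -> (0 < z)%N -> (x <= y)%N -> False.
Proof. move=> h1 h2 h3 h4; lia. Qed.

Lemma nat2 (K x y u : nat) : ~ (1 <= K - y)%N -> (x <= u)%N -> (u < K)%N -> (y <= x)%N -> False.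
Proof. move=> h1 h2 h3 h4; lia. Qed.

Lemma half_lemma (R : realType) (x y z : R) :
  y <= z -> y = 1 - x -> z <= 1/2 -> 1/2 <= x.
Proof. move=> h1 h2 h3; lra. Qed.

Lemma real_up (R : realType) (I F pE : R) :
  0 <= I -> I <= F -> 1/2 <= pE -> I / pE <= 2 * F.
Proof.
move=> I0 IF hp.
have p0 : 0 < pE by lra.
rewrite ler_pdivrMr //; nra.
Qed.

Lemma real_low (R : realType) (I F pE k : R) :
  0 <= I -> k * F <= I -> 0 <= F -> F <= pE -> pE <= 1 -> 0 < k ->
  F * k <= I / pE.
Proof.
move=> I0 kI F0 FpE pE1 k0.
have [pEe|pE0] := eqVneq pE 0.
  rewrite pEe in FpE *.
  have -> : F = 0 by lra.
  by rewrite mul0r invr0 mulr0.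
have p0 : 0 < pE by rewrite lt_def pE0 /=; lra.
rewrite ler_pdivlMr //; nra.
Qed.


Section Meas.
Context (R : realType) (d d' : measure_display)
    (Omega : measurableType d) (V : measurableType d') (K : nat)
    (X : 'I_K -> nat -> Omega -> V) (T : 'I_K -> Omega -> nat) (D : Omega -> {set 'I_K})
    (P : probability Omega R).
Hypothesis hX : forall k t, measurable_fun setT (X k t).
Hypothesis hp : is_procedure X T D.

Lemma fall_meas n E : Fall X n E -> measurable E.
Proof.
move: E; apply: smallest_sub; first exact: sigma_algebra_measurable.
move=> _ [k [t [B [_ [mB ->]]]]]; rewrite -(setTI (_ @^-1` _)); exact: hX.
Qed.

Lemma memD_meas k : measurable [set w | k \in D w].
Proof.
have -> : [set w | k \in D w] = \bigcup_(n : nat) [set w | T k w = n /\ k \in D w].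
  apply/seteqP; split => w /=; first by move=> h; exists (T k w).
  by case=> n _ [_ h].
apply: bigcupT_measurable => n; exact: fall_meas (proj2 (proj2 (hp k)) n).
Qed.

Lemma Deq_meas S : measurable [set w | D w = S].
Proof.
have -> : [set w | D w = S] =
   \bigcap_(k in [set: 'I_K]) [set w | (k \in D w) = (k \in S)].
  apply/seteqP; split => w /=; first by move=> h k _; rewrite /mkset /= h.
  by move=> h; apply/setP => k; exact: h.
apply: fin_bigcap_measurable; first exact: finite_finset.
move=> k _.
have -> : [set w | (k \in D w) = (k \in S)] =
  if k \in S then [set w | k \in D w] else ~` [set w | k \in D w].
  by case: (k \in S); apply/seteqP; split=> w; rewrite /mkset /=; case: (k \in D w).
case: (k \in S); [exact: memD_meas | exact/measurableC/memD_meas].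
Qed.

Lemma Dpred_meas (Q : {set 'I_K} -> Prop) : measurable [set w | Q (D w)].
Proof.
have -> : [set w | Q (D w)] = \bigcup_(S in [set S | Q S]) [set w | D w = S].
  apply/seteqP; split => w /=; first by move=> h; exists (D w).
  by case=> S; rewrite /mkset /= => h ->.
apply: fin_bigcup_measurable; first exact: finite_finset.
move=> S _; exact: Deq_meas.
Qed.

Lemma Dfun_meas (g : {set 'I_K} -> R) E : measurable E ->
  measurable_fun E ((fun w => (g (D w))%:E) : Omega -> \bar R).
Proof.
move=> mE _ Y mY; apply: measurableI => //.
exact: (Dpred_meas (fun S => Y (g S)%:E)).
Qed.

Let mDp Q := Dpred_meas Q.

Lemma fine_le_meas S1 S2 : measurable S1 -> measurable S2 -> S1 `<=` S2 ->
  fine (P S1) <= fine (P S2).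
Proof.
move=> m1 m2 s12; apply: fine_le; try exact: fin_num_measure.
exact: le_measure (mem_set m1) (mem_set m2) s12.
Qed.

Lemma fine_01 S : measurable S -> 0 <= fine (P S) /\ fine (P S) <= 1.
Proof.
move=> mS; split; first exact/fine_ge0/measure_ge0.
have := @fine_le_meas S setT mS (@measurableT _ Omega) (@subsetT _ S).
by rewrite probability_setT.
Qed.

Lemma fine_compl S : measurable S -> fine (P (~` S)) = 1 - fine (P S).
Proof.
move=> mS; rewrite probability_setC // -(fineK (fin_num_measure P S mS)).
by rewrite -EFinB.
Qed.

Lemma bounds1 A :
  [/\ 0 <= fine (\int[P]_(w in [set w | (1 <= #|D w|)%N])
          ((#|D w :\: A|%:R / #|D w|%:R)%:E))%E,
      fine (\int[P]_(w in [set w | (1 <= #|D w|)%N])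
          ((#|D w :\: A|%:R / #|D w|%:R)%:E))%E <= FWE1 P D A &
      K%:R^-1 * FWE1 P D A <= fine (\int[P]_(w in [set w | (1 <= #|D w|)%N])
          ((#|D w :\: A|%:R / #|D w|%:R)%:E))%E].
Proof.
apply: (@key R d Omega P _ _ (fun w => #|D w :\: A|%:R / #|D w|%:R)).
- exact: (mDp (fun S => (1 <= #|S|)%N)).
- exact: (mDp (fun S => ~~ (S \subset A))).
- exact: (Dfun_meas (fun S => #|S :\: A|%:R / #|S|%:R)) (mDp (fun S => (1 <= #|S|)%N)).
- move=> w; rewrite /mkset /= => nsub; rewrite card_gt0; apply: contra nsub.
  by move/eqP->; exact: finset.sub0set.
- move=> w; rewrite /mkset /= => h; apply/andP; apply: ratio_01 => //.
  exact/subset_leq_card/finset.subsetDl.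
- move=> w; rewrite /mkset /= => _ /negP; rewrite negbK -finset.setD_eq0 => /eqP ->.
  by rewrite cards0 mul0r.
- move=> w; rewrite /mkset /= => nsub; apply: ratio_low.
  + rewrite card_gt0; apply/set0Pn; case/subsetPn: nsub => x xD xA.
    by exists x; rewrite inE xD xA.
  + rewrite card_gt0; apply: contra nsub.
    by move/eqP->; exact: finset.sub0set.
  + by rewrite -[X in (_ <= X)%N]card_ord; exact: max_card.
- by rewrite invr_ge0 ler0n.
Qed.

Lemma bounds2 A :
  [/\ 0 <= fine (\int[P]_(w in [set w | (1 <= K - #|D w|)%N])
          ((#|A :\: D w|%:R / (K - #|D w|)%:R)%:E))%E,
      fine (\int[P]_(w in [set w | (1 <= K - #|D w|)%N])
          ((#|A :\: D w|%:R / (K - #|D w|)%:R)%:E))%E <= FWE2 P D A &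
      K%:R^-1 * FWE2 P D A <= fine (\int[P]_(w in [set w | (1 <= K - #|D w|)%N])
          ((#|A :\: D w|%:R / (K - #|D w|)%:R)%:E))%E].
Proof.
have cC (S : {set 'I_K}) : (#|S| + #|~: S| = K)%N by rewrite cardsC card_ord.
have nsubK (S : {set 'I_K}) : ~~ (A \subset S) -> (1 <= K - #|S|)%N.
  move=> nsub; have := cC S.
  have : (0 < #|~: S|)%N.
    rewrite card_gt0; apply/set0Pn; case/subsetPn: nsub => x xA xS.
    by exists x; rewrite inE.
  lia.
apply: (@key R d Omega P _ _ (fun w => #|A :\: D w|%:R / (K - #|D w|)%:R)).
- exact: (mDp (fun S => (1 <= K - #|S|)%N)).
- exact: (mDp (fun S => ~~ (A \subset S))).
- exact: (Dfun_meas (fun S => #|A :\: S|%:R / (K - #|S|)%:R)) (mDp (fun S => (1 <= K - #|S|)%N)).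
- by move=> w; rewrite /mkset /=; apply: nsubK.
- move=> w; rewrite /mkset /= => h; apply/andP; apply: ratio_01 => //.
  have <- : #|~: D w| = (K - #|D w|)%N by have := cC (D w); lia.
  by apply/subset_leq_card; rewrite finset.setDE finset.subsetIr.
- move=> w; rewrite /mkset /= => _ /negP; rewrite negbK -finset.setD_eq0 => /eqP ->.
  by rewrite cards0 mul0r.
- move=> w; rewrite /mkset /= => nsub; apply: ratio_low.
  + rewrite card_gt0; apply/set0Pn; case/subsetPn: nsub => x xA xD.
    by exists x; rewrite inE xD xA.
  + exact: nsubK.
  + lia.
- by rewrite invr_ge0 ler0n.
Qed.

End Meas.

Theorem proposition8p1 (R : realType) (d d' : measure_display)
    (Omega : measurableType d) (V : measurableType d') (K : nat)
    (X : 'I_K -> nat -> Omega -> V) (P : {set 'I_K} -> probability Omega R)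
    (lam : 'I_K -> nat -> Omega -> R)
    (hmodel : stream_model X P lam)
    (l u : nat) (hl : (0 < l)%N) (hlu : (l <= u)%N) (huK : (u < K)%N)
    (a b c dth : R) (ha : 0 < a) (hb : 0 < b) (hc : 0 < c) (hd : 0 < dth)
    (T : 'I_K -> Omega -> nat) (D : Omega -> {set 'I_K})
    (hproc : is_procedure X T D)
    (hwhich : is_hat l u a b c dth lam T D \/ is_tilde a b lam T D \/
              is_check l u a b c dth lam T D)
    (hFWE : forall A, in_Pi l u A ->
              FWE1 (P A) D A <= 1/2 /\ FWE2 (P A) D A <= 1/2) :
  (forall A, in_Pi l u A ->
     pFDR1 (P A) D A <= 2 * FWE1 (P A) D A /\
     pFDR2 (P A) D A <= 2 * FWE2 (P A) D A) /\
  (forall (T' : 'I_K -> Omega -> nat) (D' : Omega -> {set 'I_K}),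
     is_procedure X T' D' -> forall A, in_Pi l u A ->
     FWE1 (P A) D' A / K%:R <= pFDR1 (P A) D' A /\
     FWE2 (P A) D' A / K%:R <= pFDR2 (P A) D' A).
Proof.
case: hmodel => hX _ _ _ _.
have Kpos : (0:R) < K%:R by rewrite ltr0n; lia.
have cC (S : {set 'I_K}) : (#|S| + #|~: S| = K)%N by rewrite cardsC card_ord.
have F1E1 (S A : {set 'I_K}) : ~~ (S \subset A) -> (1 <= #|S|)%N.
  by case/subsetPn => x xS _; apply/card_gt0P; exists x.
have F2E2 (S A : {set 'I_K}) : ~~ (A \subset S) -> (1 <= K - #|S|)%N.
  move=> nsub; have := cC S.
  have : (0 < #|~: S|)%N.
    by case/subsetPn: nsub => x xA xS; apply/card_gt0P; exists x; rewrite inE.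
  lia.
split.
- move=> A hA; have /andP[lA Au] := hA.
  have [F1h F2h] := hFWE A hA.
  have [I10 I1F _] := @bounds1 _ _ _ _ _ _ _ _ _ (P A) hX hproc A.
  have [I20 I2F _] := @bounds2 _ _ _ _ _ _ _ _ _ (P A) hX hproc A.
  have mE1 := @Dpred_meas _ _ _ _ _ _ _ _ hX hproc (fun S => (1 <= #|S|)%N).
  have mE2 := @Dpred_meas _ _ _ _ _ _ _ _ hX hproc (fun S => (1 <= K - #|S|)%N).
  have mF1 := @Dpred_meas _ _ _ _ _ _ _ _ hX hproc (fun S => ~~ (S \subset A)).
  have mF2 := @Dpred_meas _ _ _ _ _ _ _ _ hX hproc (fun S => ~~ (A \subset S)).
  split; apply: real_up => //.
  + have := @fine_compl _ _ _ (P A) _ mE1.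
    have := @fine_le_meas _ _ _ (P A) _ _ (measurableC mE1) mF2.
    have : ~` [set w | (1 <= #|D w|)%N] `<=` [set w | ~~ (A \subset D w)].
      move=> w; rewrite /mkset /= => h; apply/negP => sub.
      exact: (@nat1 _ _ _ h lA hl (subset_leq_card sub)).
    move=> s /(_ s) h1 h2; rewrite /FWE2 in F2h; exact: (@half_lemma _ _ _ _ h1 h2) F2h.
  + have := @fine_compl _ _ _ (P A) _ mE2.
    have := @fine_le_meas _ _ _ (P A) _ _ (measurableC mE2) mF1.
    have : ~` [set w | (1 <= K - #|D w|)%N] `<=` [set w | ~~ (D w \subset A)].
      move=> w; rewrite /mkset /= => h; apply/negP => sub.
      exact: (@nat2 _ _ _ _ h Au huK (subset_leq_card sub)).
    move=> s /(_ s) h1 h2; rewrite /FWE1 in F1h; exact: (@half_lemma _ _ _ _ h1 h2) F1h.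
- move=> T' D' hp' A hA.
  have [I10 I1F KI1] := @bounds1 _ _ _ _ _ _ _ _ _ (P A) hX hp' A.
  have [I20 I2F KI2] := @bounds2 _ _ _ _ _ _ _ _ _ (P A) hX hp' A.
  have mE1 := @Dpred_meas _ _ _ _ _ _ _ _ hX hp' (fun S => (1 <= #|S|)%N).
  have mE2 := @Dpred_meas _ _ _ _ _ _ _ _ hX hp' (fun S => (1 <= K - #|S|)%N).
  have mF1 := @Dpred_meas _ _ _ _ _ _ _ _ hX hp' (fun S => ~~ (S \subset A)).
  have mF2 := @Dpred_meas _ _ _ _ _ _ _ _ hX hp' (fun S => ~~ (A \subset S)).
  split; apply: real_low => //.
  + exact: (proj1 (@fine_01 _ _ _ (P A) _ mF1)).
  + apply: (@fine_le_meas _ _ _ (P A) _ _ mF1 mE1).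
    by move=> w; rewrite /mkset /=; apply: F1E1.
  + exact: (proj2 (@fine_01 _ _ _ (P A) _ mE1)).
  + by rewrite invr_gt0.
  + exact: (proj1 (@fine_01 _ _ _ (P A) _ mF2)).
  + apply: (@fine_le_meas _ _ _ (P A) _ _ mF2 mE2).
    by move=> w; rewrite /mkset /=; apply: F2E2.
  + exact: (proj2 (@fine_01 _ _ _ (P A) _ mE2)).
  + by rewrite invr_gt0.
Qed.
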